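(* Let $\mathfrak b$ be an infinite cardinal and consider a nonstandard analysis which is $\mathfrak b$-confined, $\mathfrak b^+$-saturated, $(2^{\mathfrak b})^+$-saturated inside every set of cardinality $\le\mathfrak b$, and such that $|{}^*B|=2^{2^{\mathfrak b}}$ whenever $|B|=\mathfrak b$. Let $B$ be a set with $|B|=\mathfrak b$. Then: (i) For every internal subset $\beta\subseteq{}^*B$ containing $\nu(b)$ for all $b\in B$, and every ultrafilter $\mathcal U$ on $B$, there is $x\in\beta$ with $x\in{}^*S$ for all $S\in\mathcal U$. Consequently $|\beta|=2^{2^{\mathfrak b}}$. (ii) If $\alpha\subseteq{}^*A$ is internal ($A$ any set), then either $\alpha$ is finite or there exist an internal $\beta\subseteq{}^*B$ as in (i) and an injective map $\beta\to\alpha$ whose graph is an internal subset of ${}^*(B\times A)$; in the latter case $|\alpha|\ge2^{2^{\mathfrak b}}$. (iii) If $\alpha$ is the set of ${}^*$-members of some element of ${}^*\mathcal S$, where $\mathcal S$ is a family of finite subsets of a set $A$ (i.e. $\alpha=\{y\in{}^*A:(y,X)\in{}^*(\in_A)\}$ with $X\in{}^*\mathcal S$), then $|\alpha|$ is either finite or equal to $2^{2^{\mathfrak b}}$.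
   Context: A nonstandard analysis is a functor ${}^*:\mathbf{Set}\to\mathbf{Set}$ (images ${}^*A$, ${}^*f$) which (i) maps the full subcategory of finite sets into itself as a self-equivalence and (ii) preserves finite products and equalizers; for $E\subseteq A$, ${}^*E\subseteq{}^*A$, and ${}^*(A\times C)={}^*A\times{}^*C$. For every $a$, ${}^*\{a\}$ is a singleton $\{\nu(a)\}$, giving an injection $\nu:A\to{}^*A$. $x\in{}^*A$ is $\mathfrak m$-confined if $x\in{}^*A'$ for some $A'\subseteq A$, $|A'|\le\mathfrak m$; the analysis is $\mathfrak m$-confined if all elements of all ${}^*A$ are. A subset of ${}^*A$ is internal if it equals $\{y\in{}^*A:(y,X)\in{}^*(\in_A)\}$ for some $X\in{}^*(\mathcal PA)$, where $\in_A\subseteq A\times\mathcal PA$ is the membership relation. The analysis is $\mathfrak m$-saturated inside $A$ if every family of fewer than $\mathfrak m$ internal subsets of ${}^*A$ with the finite intersection property has nonempty intersection; $\mathfrak m$-saturated if this holds inside every set. *)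

(* Defs.v *)
(* Sets are modelled by Rocq types, subsets by predicates. *)
From Stdlib Require Import List Classical.
Set Implicit Arguments.

Definition injective {A B : Type} (f : A -> B) := forall x y, f x = f y -> x = y.
Definition surjective {A B : Type} (f : A -> B) := forall y, exists x, f x = y.
Definition bijective {A B : Type} (f : A -> B) := injective f /\ surjective f.

Definition fin (A : Type) : Prop := exists l : list A, forall x, In x l.
Definition card_le (A B : Type) : Prop := exists f : A -> B, injective f.
Definition card_eq (A B : Type) : Prop := exists f : A -> B, bijective f.

(* A nonstandard analysis: a functor * : Set -> Set which restricts to a
   self-equivalence of the full subcategory of finite sets and preserves
   finite products (terminal object + binary products) and equalizers. *)
Record NSA := {
  star : Type -> Type;
  smap : forall {A B : Type}, (A -> B) -> star A -> star B;
  smap_id : forall (A : Type) (x : star A), smap (fun a => a) x = x;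
  smap_comp : forall (A B C : Type) (f : A -> B) (g : B -> C) (x : star A),
      smap g (smap f x) = smap (fun a => g (f a)) x;
  star_fin : forall A : Type, fin A -> fin (star A);
  star_faithful : forall (A B : Type) (f g : A -> B), fin A -> fin B ->
      (forall x, smap f x = smap g x) -> forall a, f a = g a;
  star_full : forall (A B : Type) (h : star A -> star B), fin A -> fin B ->
      exists f : A -> B, forall x, smap f x = h x;
  star_ess_surj : forall C : Type, fin C -> exists A : Type, fin A /\ card_eq (star A) C;
  star_pt : star unit;
  star_pt_uniq : forall x : star unit, x = star_pt;
  star_prod : forall A B : Type,
      bijective (fun z : star (A * B) => (smap fst z, smap snd z));
  star_eq_inj : forall (A B : Type) (f g : A -> B),
      injective (smap (@proj1_sig A (fun x => f x = g x)));
  star_eq_univ : forall (A B : Type) (f g : A -> B) (y : star A),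
      smap f y = smap g y ->
      exists z : star {x : A | f x = g x}, smap (@proj1_sig _ _) z = y
}.

Section Notions.
Variable N : NSA.

(* nu(a) : the unique element of *{a}, viewed inside *A *)
Definition nu {A : Type} (a : A) : star N A := smap N (fun _ : unit => a) (star_pt N).

Definition starsub {A : Type} (E : A -> Prop) : star N A -> Prop :=
  fun y => exists z : star N {a : A | E a}, smap N (@proj1_sig _ _) z = y.

Definition ElemRel (A : Type) := {p : A * (A -> Prop) | snd p (fst p)}.

(* (y, X) in *(in_A), via *(A x PA) = *A x *PA *)
Definition smem {A : Type} (y : star N A) (X : star N (A -> Prop)) : Prop :=
  exists z : star N (ElemRel A),
    smap N (fun p : ElemRel A => fst (proj1_sig p)) z = y /\
    smap N (fun p : ElemRel A => snd (proj1_sig p)) z = X.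

Definition members {A : Type} (X : star N (A -> Prop)) : star N A -> Prop :=
  fun y => smem y X.

Definition internal {A : Type} (S : star N A -> Prop) : Prop :=
  exists X : star N (A -> Prop), forall y, S y <-> smem y X.

(* m-confined with m = |B| *)
Definition confined (B : Type) : Prop :=
  forall (A : Type) (x : star N A), exists E : A -> Prop,
    card_le {a : A | E a} B /\ starsub E x.

(* saturation inside A for families indexed by sets I with |I| <= |C|,
   i.e. families of fewer than |C|^+ internal subsets *)
Definition FIP {A I : Type} (F : I -> star N A -> Prop) : Prop :=
  forall l : list I, exists y, forall i, In i l -> F i y.

Definition saturated_inside_le (C A : Type) : Prop :=
  forall (I : Type) (F : I -> star N A -> Prop),
    card_le I C -> (forall i, internal (F i)) -> FIP F ->
    exists y, forall i, F i y.

End Notions.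

Definition ultrafilter {B : Type} (U : (B -> Prop) -> Prop) : Prop :=
  U (fun _ => True) /\ ~ U (fun _ => False) /\
  (forall S T : B -> Prop, U S -> (forall b, S b -> T b) -> U T) /\
  (forall S T : B -> Prop, U S -> U T -> U (fun b => S b /\ T b)) /\
  (forall S : B -> Prop, U S \/ U (fun b => ~ S b)).

(* Main.v *)
Require Import Defs.
From Stdlib Require Import List Classical ClassicalEpsilon FunctionalExtensionality PropExtensionality ProofIrrelevance Arith Lia Cantor.
Import ListNotations.

From mathcomp Require boolp classical_sets.
Module ZZ.
From mathcomp Require Import ssreflect ssrbool.
Import boolp classical_sets.
Lemma myZL (T : Type) (t0 : T) (R : T -> T -> Prop) :
  (forall t, R t t) -> (forall r s t, R r s -> R s t -> R r t) ->
  (forall A : T -> Prop, (forall s t, A s -> A t -> R s t \/ R t s) -> exists t, forall s, A s -> R s t) ->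
  exists t, forall s, R t s -> R s t.
Proof.
move=> Rr Rt Ch.
have := @ZL_preorder T t0 (fun s t => `[< R s t >]).
case.
- by move=> t; apply/asboolP.
- by move=> r s t /asboolP H1 /asboolP H2; apply/asboolP; eauto.
- move=> A HA. case: (Ch A).
  + move=> s t As At; case: (HA s t As At) => /asboolP; auto.
  + by move=> t Ht; exists t => s As; apply/asboolP; auto.
- by move=> t Ht; exists t => s Hs; apply/asboolP; apply: Ht; apply/asboolP.
Qed.
End ZZ.

Definition dec (P : Prop) : {P} + {~P} := excluded_middle_informative P.
Definition cid {A} {P : A -> Prop} (H : exists x, P x) : {x | P x} :=
  constructive_indefinite_description P H.

Lemma cle_refl A : card_le A A.
Proof. exists (fun x => x); intros x y H; exact H. Qed.
Lemma cle_trans A B C : card_le A B -> card_le B C -> card_le A C.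
Proof.
  intros [f Hf] [g Hg]; exists (fun x => g (f x)); intros x y H; auto.
Qed.

Section CSB.
Variables (A C : Type) (f : A -> C) (g : C -> A).
Hypotheses (Hf : injective f) (Hg : injective g).
Fixpoint X (n : nat) (a : A) : Prop :=
  match n with 0 => ~ exists c, g c = a | S n => exists a', X n a' /\ g (f a') = a end.
Definition Xs a := exists n, X n a.
Definition ginv (a : A) : C :=
  match dec (exists c, g c = a) with left H => proj1_sig (cid H) | right _ => f a end.
Lemma ginv_spec a : (exists c, g c = a) -> g (ginv a) = a.
Proof. intro H; unfold ginv; destruct (dec _) as [H'|H']; [exact (proj2_sig (cid H'))|tauto]. Qed.
Definition hcsb a := if dec (Xs a) then f a else ginv a.
Lemma notXs_ex a : ~ Xs a -> exists c, g c = a.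
Proof. intro H; apply NNPP; intro H'; apply H; exists 0; exact H'. Qed.
Lemma hcsb_bij : bijective hcsb.
Proof.
  split.
  - intros a1 a2; unfold hcsb.
    destruct (dec (Xs a1)) as [H1|H1]; destruct (dec (Xs a2)) as [H2|H2]; intro E.
    + auto.
    + exfalso; apply H2; destruct H1 as [n Hn]; exists (S n); exists a1; split; auto.
      rewrite E; apply ginv_spec, notXs_ex; auto.
    + exfalso; apply H1; destruct H2 as [n Hn]; exists (S n); exists a2; split; auto.
      rewrite <- E; apply ginv_spec, notXs_ex; auto.
    + rewrite <- (ginv_spec a1 (notXs_ex _ H1)), <- (ginv_spec a2 (notXs_ex _ H2)), E; auto.
  - intro c. destruct (dec (Xs (g c))) as [H|H].
    + destruct H as [[|n] Hn].
      * exfalso; apply Hn; exists c; auto.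
      * destruct Hn as [a' [Ha' E]]. exists a'. unfold hcsb.
        destruct (dec (Xs a')) as [_|H']; [apply Hg; auto| exfalso; apply H'; exists n; auto].
    + exists (g c); unfold hcsb; destruct (dec (Xs (g c))) as [H'|_]; [tauto|].
      apply Hg; apply ginv_spec; exists c; auto.
Qed.
End CSB.

Lemma csb A C : card_le A C -> card_le C A -> card_eq A C.
Proof. intros [f Hf] [g Hg]; exists (@hcsb A C f g); apply hcsb_bij; auto. Qed.

Lemma ceq_le A C : card_eq A C -> card_le A C.
Proof. intros [f [Hf _]]; exists f; auto. Qed.
Lemma ceq_le' A C : card_eq A C -> card_le C A.
Proof.
  intros [f [Hf Hs]]. exists (fun c => proj1_sig (cid (Hs c))).
  intros x y E. rewrite <- (proj2_sig (cid (Hs x))), <- (proj2_sig (cid (Hs y))), E; auto.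
Qed.

Section NatInf.
Variable B : Type.
Hypothesis HB : ~ fin B.
Lemma ex_notin (l : list B) : exists b, ~ In b l.
Proof. apply NNPP; intro H; apply HB; exists l; intro x; apply NNPP; intro H'; apply H; exists x; auto. Qed.
Definition next (l : list B) : B := proj1_sig (cid (ex_notin l)).
Fixpoint LL (n : nat) : list B := match n with 0 => [] | S n => next (LL n) :: LL n end.
Definition iota_inf n := next (LL n).
Lemma LL_in m n : m < n -> In (iota_inf m) (LL n).
Proof.
  induction n; intro H; [lia|]. simpl. destruct (Nat.eq_dec m n); [left; subst; auto|right; apply IHn; lia].
Qed.
Lemma iota_inj : injective iota_inf.
Proof.
  intros m n E. destruct (Nat.lt_trichotomy m n) as [H|[H|H]]; auto; exfalso.
  - apply (proj2_sig (cid (ex_notin (LL n)))); fold (next (LL n)); fold (iota_inf n); rewrite <- E; apply LL_in; auto.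
  - apply (proj2_sig (cid (ex_notin (LL m)))); fold (next (LL m)); fold (iota_inf m); rewrite E; apply LL_in; auto.
Qed.
End NatInf.

Section Cmp.
Variables A C : Type.
Definition PI (p : A -> option C) := forall a a' c, p a = Some c -> p a' = Some c -> a = a'.
Definition CTT := {p | PI p}.
Definition RR (s t : CTT) := forall a c, proj1_sig s a = Some c -> proj1_sig t a = Some c.
Lemma cmp : card_le A C \/ card_le C A.
Proof.
  assert (t0 : CTT). { exists (fun _ => None); intros a a' c H; discriminate. }
  destruct (ZZ.myZL CTT t0 RR) as [[p Hp] Hmax].
  - intros t a c; auto.
  - intros r s t H1 H2 a c H; auto.
  - intros A0 HA0.
    set (q := fun a => match dec (exists c s, A0 s /\ proj1_sig s a = Some c) with
                 left H => Some (proj1_sig (cid H)) | right _ => None end).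
    assert (Hq : forall a c, q a = Some c -> exists s, A0 s /\ proj1_sig s a = Some c).
    { intros a c; unfold q; destruct (dec _) as [H|H]; intro E; [|discriminate].
      injection E; intro; subst; exact (proj2_sig (cid H)). }
    assert (Hq2 : forall s a c, A0 s -> proj1_sig s a = Some c -> q a = Some c).
    { intros s a c As E. destruct (q a) eqn:Eq.
      - destruct (Hq _ _ Eq) as [s' [As' E']]. destruct (HA0 s s' As As') as [H|H].
        + rewrite (H _ _ E) in E'; congruence.
        + rewrite (H _ _ E') in E; congruence.
      - unfold q in Eq; destruct (dec _) as [H|H]; [discriminate|]. exfalso; apply H; exists c, s; auto. }
    assert (PIq : PI q).
    { intros a a' c E1 E2. destruct (Hq _ _ E1) as [s [As Es]]. destruct (Hq _ _ E2) as [s' [As' Es']].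
      destruct (HA0 s s' As As') as [H|H].
      - apply (proj2_sig s' a a' c); auto.
      - apply (proj2_sig s a a' c); auto. }
    exists (exist _ q PIq). intros s As a c E; simpl; eapply Hq2; eauto.
  - destruct (classic (forall a, p a <> None)) as [Htot|Hn].
    + left. assert (Hs : forall a, exists c, p a = Some c).
      { intro a; specialize (Htot a); destruct (p a); [eauto|tauto]. }
      exists (fun a => proj1_sig (cid (Hs a))). intros a a' E.
      apply (Hp a a' (proj1_sig (cid (Hs a)))); [exact (proj2_sig (cid (Hs a)))|rewrite E; exact (proj2_sig (cid (Hs a')))].
    + destruct (classic (forall c, exists a, p a = Some c)) as [Hs|Hns].
      * right. exists (fun c => proj1_sig (cid (Hs c))). intros c c' E.
        generalize (proj2_sig (cid (Hs c))) (proj2_sig (cid (Hs c'))). rewrite E. congruence.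
      * exfalso. apply NNPP in Hn; [|exact I] || idtac.
        destruct (not_all_ex_not _ _ Hn) as [a0 Ha0]. apply NNPP in Ha0.
        destruct (not_all_ex_not _ _ Hns) as [c0 Hc0].
        set (p' := fun a => if dec (a = a0) then Some c0 else p a).
        assert (PIp' : PI p').
        { intros a a' c E1 E2; unfold p' in *. destruct (dec (a = a0)); destruct (dec (a' = a0)); try congruence.
          - exfalso; apply Hc0; exists a'; congruence.
          - exfalso; apply Hc0; exists a; congruence.
          - eapply Hp; eauto. }
        assert (R1 : RR (exist _ p Hp) (exist _ p' PIp')).
        { intros a c E; simpl in *; unfold p'; destruct (dec (a = a0)); [subst; congruence|auto]. }
        specialize (Hmax _ R1 a0 c0). simpl in Hmax. unfold p' in Hmax. destruct (dec (a0 = a0)) as [_|n]; [|tauto].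
        rewrite Hmax in Ha0; [discriminate|auto].
Qed.
End Cmp.

Set Bullet Behavior "Strict Subproofs".
Set Bullet Behavior "Strict Subproofs".

Lemma sig_eq {A} {P : A -> Prop} (x y : {a | P a}) : proj1_sig x = proj1_sig y -> x = y.
Proof. destruct x, y; simpl; intro; subst; f_equal; apply proof_irrelevance. Qed.

Section Hess.
Variable B : Type.
Hypothesis HB : ~ fin B.
Let io := iota_inf B HB.
Let io_inj : injective io := iota_inj B HB.

Definition HGood (X : B -> Prop) (f : B * B -> B) :=
  (forall n, X (io n)) /\ (forall p, X (fst p) -> X (snd p) -> X (f p)) /\
  (forall p q, X (fst p) -> X (snd p) -> X (fst q) -> X (snd q) -> f p = f q -> p = q).
Definition HT := {xf : (B -> Prop) * (B * B -> B) | HGood (fst xf) (snd xf)}.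
Definition HX (s : HT) := fst (proj1_sig s).
Definition Hf (s : HT) := snd (proj1_sig s).
Definition HR (s t : HT) := (forall b, HX s b -> HX t b) /\
  (forall p, HX s (fst p) -> HX s (snd p) -> Hf s p = Hf t p).

Definition ioinv (b : B) : nat := match dec (exists n, io n = b) with left H => proj1_sig (cid H) | right _ => 0 end.
Lemma ioinv_spec b : (exists n, io n = b) -> io (ioinv b) = b.
Proof. intro H; unfold ioinv; destruct (dec _); [exact (proj2_sig (cid e))|tauto]. Qed.

Lemma HT0 : HT.
Proof.
  exists ((fun b => exists n, io n = b), (fun p => io (to_nat (ioinv (fst p), ioinv (snd p))))).
  split; [|split]; cbn [fst snd].
  - intro n; exists n; auto.
  - intros; eexists; eauto.
  - intros [p1 p2] [q1 q2] H1 H2 H3 H4 E; cbn [fst snd] in *.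
    apply io_inj in E. apply (f_equal of_nat) in E. rewrite !cancel_of_to in E.
    injection E; intros E2 E1.
    rewrite <- (ioinv_spec p1 H1), <- (ioinv_spec p2 H2), <- (ioinv_spec q1 H3), <- (ioinv_spec q2 H4), E1, E2; auto.
Qed.

Lemma chain_ub (A0 : HT -> Prop) : (forall s t, A0 s -> A0 t -> HR s t \/ HR t s) ->
  exists t, forall s, A0 s -> HR s t.
Proof.
  intro Htot. destruct (classic (exists s, A0 s)) as [[s0 As0]|Hne];
    [|exists HT0; intros s As; exfalso; eauto].
  set (X := fun b => exists s, A0 s /\ HX s b).
  set (f := fun p => match dec (exists s, A0 s /\ HX s (fst p) /\ HX s (snd p)) with
                     left H => Hf (proj1_sig (cid H)) p | right _ => io 0 end).
  assert (Hf1 : forall s p, A0 s -> HX s (fst p) -> HX s (snd p) -> f p = Hf s p).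
  { intros s p As H1 H2; unfold f; destruct (dec _) as [H|H]; [|exfalso; apply H; eauto].
    destruct (proj2_sig (cid H)) as [As' [H1' H2']].
    destruct (Htot s _ As As') as [[_ R]|[_ R]]; [symmetry; auto| auto]. }
  assert (two : forall b c, X b -> X c -> exists s, A0 s /\ HX s b /\ HX s c).
  { intros b c [s [As Hs]] [s' [As' Hs']]. destruct (Htot s s' As As') as [[R _]|[R _]].
    - exists s'; auto.
    - exists s; auto. }
  assert (four : forall a b c d, X a -> X b -> X c -> X d ->
             exists s, A0 s /\ HX s a /\ HX s b /\ HX s c /\ HX s d).
  { intros a b c d Ha Hb Hc Hd. destruct (two a b Ha Hb) as [s [As [H1 H2]]].
    destruct (two c d Hc Hd) as [s' [As' [H3 H4]]]. destruct (Htot s s' As As') as [[R _]|[R _]].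
    - exists s'; auto 6.
    - exists s; auto 6. }
  assert (G : HGood X f).
  { split; [|split].
    - intro n; exists s0; split; auto. destruct (proj2_sig s0) as [G _]; apply G.
    - intros p H1 H2. destruct (two _ _ H1 H2) as [s [As [K1 K2]]]. exists s; split; auto.
      rewrite (Hf1 s p As K1 K2). destruct (proj2_sig s) as [_ [G _]]; apply G; auto.
    - intros p q H1 H2 H3 H4 E. destruct (four _ _ _ _ H1 H2 H3 H4) as [s [As [K1 [K2 [K3 K4]]]]].
      rewrite (Hf1 s p As K1 K2), (Hf1 s q As K3 K4) in E.
      destruct (proj2_sig s) as [_ [_ G]]; apply G; auto. }
  exists (exist _ (X, f) G). intros s As. split.
  - intros b Hb; exists s; auto.
  - intros p K1 K2; simpl. symmetry; apply Hf1; auto.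
Qed.

Lemma hessenberg : card_le (B * B) B.
Proof.
  destruct (ZZ.myZL HT HT0 HR) as [[[X f] [G1 [G2 G3]]] Hmax].
  - intro t; split; auto.
  - intros r s t [R1 R2] [S1 S2]; split; auto.
    intros p H1 H2; rewrite R2; auto.
  - exact chain_ub.
  - simpl in *. destruct (cmp {b | X b} {b | ~ X b}) as [[j Hj]|[j Hj]].
    + (* contradiction with maximality *)
      exfalso.
      set (jfun := fun b => match dec (X b) with left H => proj1_sig (j (exist _ b H)) | right _ => io 0 end).
      assert (Jn : forall x, X x -> ~ X (jfun x)).
      { intros x H; unfold jfun; destruct (dec (X x)); [exact (proj2_sig (j _))|tauto]. }
      assert (Ji : forall x x', X x -> X x' -> jfun x = jfun x' -> x = x').
      { intros x x' H H' E; unfold jfun in E; destruct (dec (X x)); destruct (dec (X x')); try tauto.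
        apply sig_eq in E. apply Hj in E. injection E; auto. }
      set (J := fun b => exists x, X x /\ jfun x = b).
      set (jinv := fun b => match dec (J b) with left H => proj1_sig (cid H) | right _ => io 0 end).
      assert (Jv : forall b, J b -> X (jinv b) /\ jfun (jinv b) = b).
      { intros b H; unfold jinv; destruct (dec (J b)); [exact (proj2_sig (cid j0))|tauto]. }
      set (X' := fun b => X b \/ J b).
      set (r := fun b => if dec (X b) then b else jinv b).
      set (tb := fun b => if dec (X b) then 0 else 1).
      assert (rX : forall b, X' b -> X (r b)).
      { intros b Hb; unfold r; destruct (dec (X b)) as [x|x]; auto; destruct Hb as [Hb|Hb]; [tauto| apply Jv; auto]. }
      assert (recon : forall b c, X' b -> X' c -> tb b = tb c -> r b = r c -> b = c).
      { intros b c Hb Hc E1 E2; unfold tb, r in *.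
        destruct (dec (X b)) as [xb|xb]; destruct (dec (X c)) as [xc|xc]; try discriminate; auto.
        destruct Hb as [Hb|Hb]; [tauto|]. destruct Hc as [Hc|Hc]; [tauto|].
        rewrite <- (proj2 (Jv b Hb)), <- (proj2 (Jv c Hc)), E2; auto. }
      assert (tb01 : forall b, tb b = 0 \/ tb b = 1).
      { intro b; unfold tb; destruct (dec (X b)); auto. }
      set (f' := fun p => if dec (X (fst p) /\ X (snd p)) then f p
                          else jfun (f (f (io (2 * tb (fst p) + tb (snd p)), r (fst p)), r (snd p)))).
      assert (inX : forall p, X' (fst p) -> X' (snd p) ->
                  X (f (f (io (2 * tb (fst p) + tb (snd p)), r (fst p)), r (snd p)))).
      { intros p H1 H2. apply G2; simpl; [apply G2; simpl|]; auto. }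
      assert (G' : HGood X' f').
      { split; [|split].
        - intro n; left; auto.
        - intros p H1 H2; unfold f'; destruct (dec _) as [[K1 K2]|K].
          + left; apply G2; auto.
          + right; eexists; split; [|reflexivity]; apply inX; auto.
        - intros p q H1 H2 H3 H4 E; unfold f' in E.
          destruct (dec (X (fst p) /\ X (snd p))) as [[K1 K2]|K];
          destruct (dec (X (fst q) /\ X (snd q))) as [[K3 K4]|K'].
          + apply G3; auto.
          + exfalso; apply (Jn _ (inX q H3 H4)); rewrite <- E; apply G2; auto.
          + exfalso; apply (Jn _ (inX p H1 H2)); rewrite E; apply G2; auto.
          + apply Ji in E; try apply inX; auto.
            apply G3 in E; simpl; try apply G2; simpl; auto.
            injection E; intros E2 E1. apply G3 in E1; simpl; auto.
            injection E1; intros E3 E4. apply io_inj in E4.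
            destruct p as [p1 p2], q as [q1 q2]; simpl in *.
            assert (tb p1 = tb q1 /\ tb p2 = tb q2) as [T1 T2]
              by (destruct (tb01 p1), (tb01 p2), (tb01 q1), (tb01 q2); lia).
            f_equal; apply recon; auto. }
      assert (R1 : HR (exist _ (X, f) (conj G1 (conj G2 G3))) (exist _ (X', f') G')).
      { split; simpl.
        - intros b H; left; auto.
        - intros p H1 H2; unfold HX, Hf in *; simpl in *; unfold f'; destruct (dec (X (fst p) /\ X (snd p))); [reflexivity|tauto]. }
      destruct (Hmax _ R1) as [S1 _]. simpl in S1.
      assert (J (jfun (io 0))) by (exists (io 0); split; auto).
      apply (Jn (io 0) (G1 0)). apply S1. right; auto.
    + set (h := fun b => match dec (X b) with left H => (b, io 0) | right H => (proj1_sig (j (exist _ b H)), io 1) end).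
      assert (hX : forall b, X (fst (h b)) /\ X (snd (h b))).
      { intro b; unfold h; destruct (dec (X b)); simpl; split; auto. exact (proj2_sig (j _)). }
      assert (hi : injective h).
      { intros b c E; unfold h in E; destruct (dec (X b)) as [xb|xb]; destruct (dec (X c)) as [xc|xc];
        pose proof (f_equal fst E) as E1; pose proof (f_equal snd E) as E2; simpl in E1, E2;
        [auto| apply io_inj in E2; discriminate | apply io_inj in E2; discriminate |
         apply sig_eq in E1; apply Hj in E1; injection E1; auto]. }
      set (gB := fun b => f (h b)).
      assert (gX : forall b, X (gB b)) by (intro b; apply G2; apply hX).
      assert (gi : injective gB) by (intros b c E; apply hi; apply G3; auto; apply hX).
      exists (fun p => f (gB (fst p), gB (snd p))).
      intros [p1 p2] [q1 q2] E; simpl in E. apply G3 in E; simpl; auto.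
      injection E; intros; f_equal; auto.
Qed.
End Hess.

Set Bullet Behavior "Strict Subproofs".

Lemma prod_le A A' C C' : card_le A A' -> card_le C C' -> card_le (A * C) (A' * C').
Proof.
  intros [f Hf] [g Hg]; exists (fun p => (f (fst p), g (snd p))).
  intros [a c] [a' c'] E; simpl in E; injection E; intros; f_equal; auto.
Qed.

Lemma list_map_le A C : card_le A C -> card_le (list A) (list C).
Proof.
  intros [f Hf]; exists (map f). intro l; induction l as [|x l IH]; intros [|y l'] E; simpl in E; try discriminate; auto.
  injection E; intros E1 E2; f_equal; auto.
Qed.

Lemma option_le A C : card_le A C -> card_le (option A) (option C).
Proof.
  intros [f Hf]; exists (fun o => match o with Some a => Some (f a) | None => None end).
  intros [a|] [a'|] E; try discriminate; auto. injection E; intro; f_equal; auto.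
Qed.

Section Inf.
Variable B : Type.
Hypothesis HB : ~ fin B.
Definition io := iota_inf B HB.
Lemma io_inj : injective io. Proof. exact (iota_inj B HB). Qed.
Definition hp : B * B -> B := proj1_sig (cid (hessenberg B HB)).
Lemma hp_inj : injective hp. Proof. exact (proj2_sig (cid (hessenberg B HB))). Qed.

Lemma nat_le : card_le nat B. Proof. exists io; apply io_inj. Qed.
Lemma bool_le : card_le bool B.
Proof.
  exists (fun b : bool => if b then io 1 else io 0).
  intros [|] [|] E; auto; apply io_inj in E; discriminate.
Qed.
Lemma sq_le : card_le (B * B) B. Proof. exists hp; apply hp_inj. Qed.

Fixpoint enc (l : list B) : B := match l with [] => io 0 | x :: l => hp (x, enc l) end.
Lemma list_le : card_le (list B) B.
Proof.
  exists (fun l => hp (io (length l), enc l)).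
  intros l l' E. apply hp_inj in E. injection E; intros E2 E1. apply io_inj in E1.
  clear E; revert l' E1 E2; induction l as [|x l IH]; intros [|y l'] E1 E2; simpl in *; try discriminate; auto.
  apply hp_inj in E2; injection E2; intros; f_equal; auto.
Qed.

Lemma optB_le : card_le (option B) B.
Proof.
  exists (fun o => match o with Some b => hp (b, io 0) | None => hp (io 0, io 1) end).
  intros [a|] [a'|] E; auto; apply hp_inj in E; injection E; intros; subst; auto;
    match goal with H : io _ = io _ |- _ => apply io_inj in H; discriminate end.
Qed.

Lemma optfun_le : card_le (option (B -> bool)) (B -> bool).
Proof.
  assert (Sl : card_le B (option B)) by (exists (@Some B); intros x y E; injection E; auto).
  destruct (csb _ _ optB_le Sl) as [e [ei es]].
  set (pi := fun b => proj1_sig (cid (es b))).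
  assert (pe : forall o, pi (e o) = o).
  { intro o; apply ei; exact (proj2_sig (cid (es (e o)))). }
  exists (fun o b => match pi b with
                    | None => match o with None => true | Some _ => false end
                    | Some b' => match o with None => false | Some h => h b' end end).
  intros o1 o2 E.
  assert (E0 := f_equal (fun F => F (e None)) E). simpl in E0. rewrite pe in E0.
  destruct o1 as [h1|], o2 as [h2|]; try discriminate; auto.
  f_equal; apply functional_extensionality; intro b'.
  assert (E1 := f_equal (fun F => F (e (Some b'))) E). simpl in E1. rewrite pe in E1. exact E1.
Qed.
End Inf.

Lemma pred_le B (P : (B -> Prop) -> Prop) : card_le {S | P S} (B -> bool).
Proof.
  exists (fun S b => if dec (proj1_sig S b) then true else false).
  intros [S HS] [T HT] E. apply sig_eq; simpl.
  apply functional_extensionality; intro b; apply propositional_extensionality.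
  assert (E1 := f_equal (fun F => F b) E); simpl in E1.
  destruct (dec (S b)), (dec (T b)); try discriminate; tauto.
Qed.

Set Bullet Behavior "Strict Subproofs".

Section Indep.
Variable B : Type.

Lemma sep1 (h : B -> bool) (l : list (B -> bool)) :
  exists F, forall h', In h' l -> h <> h' -> map h F <> map h' F.
Proof.
  induction l as [|h1 l [F HF]].
  - exists []; intros h' [].
  - destruct (classic (h = h1)) as [E|NE].
    + exists F; intros h' [<-|H]; auto.
    + destruct (not_all_ex_not _ _ (fun H => NE (functional_extensionality _ _ H))) as [b Hb].
      exists (b :: F). intros h' [<-|H] Hn E; simpl in E; injection E; intros E1 E2; auto.
      apply (HF h'); auto.
Qed.

Lemma app_len_inv {T} (x1 x2 y1 y2 : list T) : length x1 = length y1 -> x1 ++ x2 = y1 ++ y2 -> x1 = y1 /\ x2 = y2.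
Proof.
  revert y1; induction x1 as [|a x1 IH]; intros [|b y1] L E; simpl in *; try discriminate; auto.
  injection E; injection L; intros L' E1 E2; destruct (IH y1 L' E1); subst; auto.
Qed.

Lemma map_app_neq (h h' : B -> bool) F G : map h F <> map h' F -> map h (F ++ G) <> map h' (F ++ G).
Proof.
  intros N E; apply N. rewrite !map_app in E. apply app_len_inv in E; [tauto|rewrite !length_map; auto].
Qed.

Lemma map_app_neq2 (h h' : B -> bool) F G : map h G <> map h' G -> map h (F ++ G) <> map h' (F ++ G).
Proof.
  intros N E; apply N. rewrite !map_app in E. apply app_len_inv in E; [tauto|rewrite !length_map; auto].
Qed.

Lemma sep (l : list (B -> bool)) :
  exists F, forall h h', In h l -> In h' l -> h <> h' -> map h F <> map h' F.
Proof.
  induction l as [|h1 l [F HF]].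
  - exists []; intros h h' [].
  - destruct (sep1 h1 l) as [G HG]. exists (F ++ G).
    intros h h' [<-|H] [<-|H'] Hn.
    + tauto.
    + apply map_app_neq2; auto.
    + apply map_app_neq2; intro E; apply (HG h); auto.
    + apply map_app_neq; auto.
Qed.

Definition Dt := (list B * list (list bool))%type.
Definition Af (h : B -> bool) (d : Dt) : Prop := In (map h (fst d)) (snd d).

Lemma indep_D (l : list (B -> bool)) (s : (B -> bool) -> bool) :
  exists d : Dt, forall h, In h l -> (Af h d <-> s h = true).
Proof.
  destruct (sep l) as [F HF]. exists (F, map (fun h => map h F) (filter s l)).
  intros h Hh; unfold Af; simpl; split.
  - intro H; apply in_map_iff in H; destruct H as [h' [E H']]. apply filter_In in H'; destruct H' as [H1 H2].
    destruct (classic (h' = h)) as [<-|NE]; auto. exfalso; apply (HF h' h); auto.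
  - intro H; apply in_map_iff; exists h; split; auto; apply filter_In; auto.
Qed.

Hypothesis HB : ~ fin B.
Lemma D_le : card_le Dt B.
Proof.
  eapply cle_trans; [apply prod_le|apply (sq_le B HB)].
  - apply (list_le B HB).
  - eapply cle_trans; [apply list_map_le|apply (list_le B HB)].
    eapply cle_trans; [apply list_map_le, (bool_le B HB)|apply (list_le B HB)].
Qed.

Definition jD : Dt -> B := proj1_sig (cid D_le).
Definition Sfam (h : B -> bool) (b : B) : Prop := exists d, jD d = b /\ Af h d.

Lemma indep_B (l : list (B -> bool)) (s : (B -> bool) -> bool) :
  exists b, forall h, In h l -> (Sfam h b <-> s h = true).
Proof.
  destruct (indep_D l s) as [d Hd]. exists (jD d). intros h Hh. rewrite <- Hd by auto. split.
  - intros [d' [E H]]. apply (proj2_sig (cid D_le)) in E. subst; auto.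
  - intro; exists d; auto.
Qed.
End Indep.

Set Bullet Behavior "Strict Subproofs".

Section Calc.
Variable N : NSA.
Notation st := (star N).
Notation sm := (smap N).

Lemma smap_ext {A C} (f g : A -> C) x : (forall a, f a = g a) -> sm f x = sm g x.
Proof. intro H; replace g with f; auto; apply functional_extensionality; auto. Qed.

Lemma smap_const {A C} (c : C) (x : st A) : sm (fun _ => c) x = nu N c.
Proof.
  unfold nu. rewrite <- (star_pt_uniq N (sm (fun _ => tt) x)).
  rewrite smap_comp; auto.
Qed.

Lemma smap_nu {A C} (f : A -> C) a : sm f (nu N a) = nu N (f a).
Proof. unfold nu; rewrite smap_comp; auto. Qed.

Lemma fin_unit : fin unit. Proof. exists [tt]; intros []; simpl; auto. Qed.
Lemma fin_bool : fin bool. Proof. exists [true; false]; intros []; simpl; auto. Qed.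

Lemma star_empty {A} : (A -> False) -> st A -> False.
Proof.
  intros H x. assert (FA : fin A) by (exists []; intro a; destruct (H a)).
  destruct (star_full N (fun _ : st unit => x) fin_unit FA) as [f _]. exact (H (f tt)).
Qed.

Lemma fin_std {A} : fin A -> forall x : st A, exists a, x = nu N a.
Proof.
  intros FA x. destruct (star_full N (fun _ : st unit => x) fin_unit FA) as [f Hf].
  exists (f tt). rewrite <- (Hf (star_pt N)). unfold nu. apply smap_ext. intros []; auto.
Qed.

Lemma nu_inj {A} (a a' : A) : nu N a = nu N a' -> a = a'.
Proof.
  intro E. apply NNPP; intro NE.
  set (chi := fun x => if dec (x = a) then true else false).
  assert (E2 := f_equal (sm chi) E). rewrite !smap_nu in E2. unfold chi in E2.
  destruct (dec (a = a)); [|tauto]. destruct (dec (a' = a)); [congruence|].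
  unfold nu in E2.
  assert (K := star_faithful N (fun _ : unit => true) (fun _ => false) fin_unit fin_bool).
  assert (true = false); [|discriminate].
  apply (K ltac:(intro y; rewrite (star_pt_uniq N y); exact E2) tt).
Qed.

Definition sp {A C} (y : st A) (c : st C) : st (A * C) :=
  proj1_sig (cid (proj2 (star_prod N A C) (y, c))).
Lemma sp_spec {A C} (y : st A) (c : st C) : sm fst (sp y c) = y /\ sm snd (sp y c) = c.
Proof.
  unfold sp. destruct (cid _) as [z Hz]; simpl. injection Hz; auto.
Qed.
Lemma sp_fst {A C} (y : st A) (c : st C) : sm fst (sp y c) = y. Proof. apply sp_spec. Qed.
Lemma sp_snd {A C} (y : st A) (c : st C) : sm snd (sp y c) = c. Proof. apply sp_spec. Qed.
Lemma sp_ext {A C} (w : st (A * C)) y c : sm fst w = y -> sm snd w = c -> w = sp y c.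
Proof.
  intros E1 E2. apply (proj1 (star_prod N A C)). simpl. rewrite sp_fst, sp_snd; subst; auto.
Qed.
Lemma sp_map {A C D} (g1 : D -> A) (g2 : D -> C) z :
  sm (fun p => (g1 p, g2 p)) z = sp (sm g1 z) (sm g2 z).
Proof. apply sp_ext; rewrite smap_comp; auto. Qed.

Notation ss := (starsub N).

Lemma ss_all {A C} (Q : C -> Prop) (g : A -> C) (z : st A) : (forall a, Q (g a)) -> ss Q (sm g z).
Proof.
  intro H. exists (sm (fun a => exist Q (g a) (H a)) z). rewrite smap_comp; auto.
Qed.

Lemma ss_img {A C} (P : A -> Prop) (Q : C -> Prop) (g : A -> C) (z : st A) :
  (forall a, P a -> Q (g a)) -> ss P z -> ss Q (sm g z).
Proof.
  intros H [w <-]. rewrite smap_comp. apply (ss_all Q (fun a => g (proj1_sig a))).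
  intros [a Ha]; simpl; auto.
Qed.

Lemma ss_mono {A} (P Q : A -> Prop) y : (forall a, P a -> Q a) -> ss P y -> ss Q y.
Proof. intros H K. rewrite <- (smap_id N A y). apply (ss_img P); auto. Qed.

Lemma ss_true {A} (y : st A) : ss (fun _ => True) y.
Proof. rewrite <- (smap_id N A y). apply ss_all; auto. Qed.

Lemma ss_nu {A} (P : A -> Prop) a : P a -> ss P (nu N a).
Proof. intro H. unfold nu. apply (ss_all P (fun _ => a)); auto. Qed.

Lemma ss_of_eq {A C} (f g : A -> C) z : sm f z = sm g z -> ss (fun a => f a = g a) z.
Proof.
  intro E. destruct (star_eq_univ N f g z E) as [w Hw]. exists w; auto.
Qed.

Lemma ss_eq {A C} (f g : A -> C) z : ss (fun a => f a = g a) z -> sm f z = sm g z.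
Proof.
  intros [w <-]. rewrite !smap_comp. apply smap_ext. intros [a Ha]; auto.
Qed.

Lemma ss_pre {A C} (Q : C -> Prop) (g : A -> C) (z : st A) : ss Q (sm g z) -> ss (fun a => Q (g a)) z.
Proof.
  intros [w Hw]. set (u := sp z w).
  assert (E : sm (fun p => g (fst p)) u = sm (fun p => proj1_sig (snd p)) u).
  { rewrite <- (smap_comp N fst g), <- (smap_comp N snd (@proj1_sig _ _)). unfold u. rewrite sp_fst, sp_snd; auto. }
  destruct (star_eq_univ N _ _ u E) as [v Hv].
  assert (k : forall p : {p : A * {c | Q c} | g (fst p) = proj1_sig (snd p)}, Q (g (fst (proj1_sig p)))).
  { intros [[a [c Hc]] Hp]; simpl in *; rewrite Hp; auto. }
  exists (sm (fun p => exist (fun a => Q (g a)) (fst (proj1_sig p)) (k p)) v).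
  rewrite smap_comp. simpl. rewrite <- (smap_comp N (@proj1_sig _ _) fst). rewrite Hv. apply sp_fst.
Qed.

Lemma ss_pre_iff {A C} (Q : C -> Prop) (g : A -> C) (z : st A) : ss Q (sm g z) <-> ss (fun a => Q (g a)) z.
Proof. split; [apply ss_pre|]. intro H. apply (ss_img (fun a => Q (g a))); auto. Qed.

Lemma ss_and {A} (P Q : A -> Prop) y : ss P y -> ss Q y -> ss (fun a => P a /\ Q a) y.
Proof.
  intros [z1 <-] H2. apply ss_pre in H2. apply (ss_img _ _ _ _ (fun a (H : Q (proj1_sig a)) => conj (proj2_sig a) H) H2).
Qed.

Lemma ss_empty {A} (P : A -> Prop) y : (forall a, ~ P a) -> ss P y -> False.
Proof. intros H [z _]. apply (star_empty (fun a => H (proj1_sig a) (proj2_sig a)) z). Qed.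

Lemma ss_dec {A} (P : A -> Prop) y : ss P y \/ ss (fun a => ~ P a) y.
Proof.
  set (chi := fun a => if dec (P a) then true else false).
  destruct (fin_std fin_bool (sm chi y)) as [[|] E]; rewrite <- (smap_const _ y) in E;
    apply ss_of_eq in E; [left|right]; revert E; apply ss_mono; unfold chi; intro a;
    destruct (dec (P a)); auto; discriminate.
Qed.

Lemma ss_choice {A C} (P : C -> Prop) (Q : A * C -> Prop) x :
  (forall c, P c -> exists t, Q (t, c)) -> ss P x -> exists t, ss Q (sp t x).
Proof.
  intros H [z <-].
  set (s := fun w : {c | P c} => cid (H (proj1_sig w) (proj2_sig w))).
  exists (sm (fun w => proj1_sig (s w)) z).
  assert (E : sp (sm (fun w => proj1_sig (s w)) z) (sm (@proj1_sig _ _) z) =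
              sm (fun w => (proj1_sig (s w), proj1_sig w)) z) by (symmetry; apply sp_map).
  rewrite E. apply ss_all. intro w; exact (proj2_sig (s w)).
Qed.

Lemma smem_ss {A} (y : st A) (X : st (A -> Prop)) :
  smem N y X <-> ss (fun p : A * (A -> Prop) => snd p (fst p)) (sp y X).
Proof.
  split.
  - intros [z [E1 E2]]. exists z. apply sp_ext; rewrite smap_comp; auto.
  - intros [z E]. exists z. split; [rewrite <- (sp_fst y X)|rewrite <- (sp_snd y X)]; rewrite <- E; rewrite smap_comp; reflexivity.

Qed.

Lemma smem_nu {A} (S : A -> Prop) y : smem N y (nu N S) <-> ss S y.
Proof.
  rewrite smem_ss.
  assert (H : sm (fun a => (a, S)) y = sp y (nu N S)).
  { apply sp_ext; rewrite smap_comp; simpl; [apply smap_id|apply smap_const]. }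
  rewrite <- H, ss_pre_iff. simpl. tauto.
Qed.

Lemma internal_ss {A} (S : A -> Prop) : internal N (ss S).
Proof. exists (nu N S); intro y; rewrite smem_nu; tauto. Qed.

Lemma smem_map {A C} (Phi : C -> A -> Prop) (y : st A) (c : st C) :
  smem N y (sm Phi c) <-> ss (fun p => Phi (snd p) (fst p)) (sp y c).
Proof.
  rewrite smem_ss.
  assert (H : sm (fun p => (fst p, Phi (snd p))) (sp y c) = sp y (sm Phi c)).
  { apply sp_ext; rewrite smap_comp; [exact (sp_fst y c)|].
    simpl. rewrite <- (smap_comp N snd Phi), sp_snd; reflexivity. }
  rewrite <- H, ss_pre_iff. simpl. tauto.
Qed.

Lemma smap_inj {A C} (f : A -> C) : injective f -> injective (sm f).
Proof.
  intros Hf x y E. set (u := sp x y).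
  assert (E' : sm (fun p => f (fst p)) u = sm (fun p => f (snd p)) u).
  { rewrite <- (smap_comp N fst f), <- (smap_comp N snd f). unfold u; rewrite sp_fst, sp_snd; auto. }
  apply ss_of_eq in E'. apply (ss_mono _ (fun p => fst p = snd p)) in E'; [|intros p; apply Hf].
  apply ss_eq in E'. unfold u in E'; rewrite sp_fst, sp_snd in E'; auto.
Qed.
End Calc.

Section Calc2.
Variable N : NSA.
Notation st := (star N).
Notation sm := (smap N).
Notation ss := (starsub N).

Lemma smc {A C D} (f : C -> D) (g : A -> C) z : sm (fun q => f (g q)) z = sm f (sm g z).
Proof. symmetry; apply smap_comp. Qed.

Lemma ss_sp {A C D} (Q : A * C -> Prop) (g1 : D -> A) (g2 : D -> C) z u v :
  ss Q (sp N u v) -> sm g1 z = u -> sm g2 z = v -> ss (fun q => Q (g1 q, g2 q)) z.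
Proof. intros H E1 E2. apply (ss_pre N Q (fun q => (g1 q, g2 q))). rewrite sp_map, E1, E2; auto. Qed.

Lemma ss_sp_img {A C D} (P : D -> Prop) (Q : A * C -> Prop) (g1 : D -> A) (g2 : D -> C) z u v :
  ss P z -> (forall q, P q -> Q (g1 q, g2 q)) -> sm g1 z = u -> sm g2 z = v -> ss Q (sp N u v).
Proof. intros H K E1 E2. rewrite <- E1, <- E2, <- sp_map. apply (ss_img N P); auto. Qed.

Lemma ss_std_lt (n : nat) z : ss (fun k => k < n) z -> exists k, k < n /\ z = nu N k.
Proof.
  intros [w <-].
  assert (F : fin {k | k < n}).
  { exists (flat_map (fun k => match dec (k < n) with left H => [exist _ k H] | right _ => [] end) (seq 0 n)).
    intros [k H]. apply in_flat_map. exists k; split; [apply in_seq; lia|].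
    destruct (dec (k < n)); [left; apply sig_eq; auto|tauto]. }
  destruct (fin_std N F w) as [[k H] ->]. exists k; split; auto. rewrite smap_nu; auto.
Qed.
End Calc2.

Lemma fin_bounded {T} (g : T -> nat) n : injective g -> (forall t, g t < n) -> fin T.
Proof.
  intros Hi Hb.
  set (pick := fun k => match dec (exists t, g t = k) with left H => [proj1_sig (cid H)] | right _ => [] end).
  exists (flat_map pick (seq 0 n)). intro t. apply in_flat_map. exists (g t); split; [apply in_seq; specialize (Hb t); lia|].
  unfold pick; destruct (dec _) as [H|H]; [|exfalso; eauto]. left. apply Hi. exact (proj2_sig (cid H)).
Qed.

Section Calc3.
Variable N : NSA.
Notation sm := (smap N).
Lemma spf {A C D} (h : A -> D) (u : star N A) (v : star N C) : sm (fun q => h (fst q)) (sp N u v) = sm h u.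
Proof. rewrite smc, sp_fst; auto. Qed.
Lemma sps {A C D} (h : C -> D) (u : star N A) (v : star N C) : sm (fun q => h (snd q)) (sp N u v) = sm h v.
Proof. rewrite smc, sp_snd; auto. Qed.
End Calc3.

Set Bullet Behavior "Strict Subproofs".

Definition Dn {A} (n : nat) (Y : A -> Prop) :=
  exists l : list A, length l = n /\ NoDup l /\ forall a, In a l -> Y a.

Lemma small_enum {A} n (Y : A -> Prop) : ~ Dn n Y ->
  exists l, NoDup l /\ length l < n /\ (forall a, Y a -> In a l).
Proof.
  intro H.
  assert (K : forall k, (exists l, length l = k /\ NoDup l /\ forall a, In a l -> Y a) \/
                   (exists l, NoDup l /\ length l < k /\ (forall a, Y a -> In a l))).
  { induction k as [|k [[l [L [ND S]]]|[l [ND [L S]]]]].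
    - left; exists []; simpl; repeat split; auto. constructor. intros a [].
    - destruct (classic (forall a, Y a -> In a l)) as [Hc|Hc].
      + right; exists l; repeat split; auto. lia.
      + destruct (not_all_ex_not _ _ Hc) as [a Ha].
        left; exists (a :: l); simpl; repeat split; auto.
        * constructor; tauto.
        * intros b [<-|Hb]; [tauto|auto].
    - right; exists l; repeat split; auto. }
  destruct (K n) as [K1|K1]; [tauto|exact K1].
Qed.

Fixpoint pos {A} (a : A) (l : list A) : nat :=
  match l with [] => 0 | x :: l => if dec (x = a) then 0 else S (pos a l) end.
Lemma pos_spec {A} (a : A) l d : In a l -> pos a l < length l /\ nth (pos a l) l d = a.
Proof.
  induction l as [|x l IH]; simpl; [tauto|]. intro H.
  destruct (dec (x = a)); [split; auto; lia|]. destruct H as [H|H]; [tauto|].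
  destruct (IH H); split; auto; lia.
Qed.

Section FinStep.
Variable N : NSA.
Variable A : Type.
Notation st := (star N).
Notation sm := (smap N).
Notation ss := (starsub N).

Definition enum n (Y : A -> Prop) : list A :=
  match dec (~ Dn n Y) with left H => proj1_sig (cid (small_enum n Y H)) | right _ => [] end.
Definition idx n (p : A * (A -> Prop)) : nat := pos (fst p) (enum n (snd p)).

Lemma idx_lt n a Y : Y a -> ~ Dn n Y -> idx n (a, Y) < n.
Proof.
  intros Ha HD. unfold idx, enum; simpl. destruct (dec _) as [H|H]; [|tauto].
  destruct (proj2_sig (cid (small_enum n Y H))) as [_ [L S]].
  destruct (pos_spec a _ a (S a Ha)); lia.
Qed.

Lemma idx_inj n a a' Y : Y a -> Y a' -> ~ Dn n Y -> idx n (a, Y) = idx n (a', Y) -> a = a'.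
Proof.
  intros Ha Ha' HD E. unfold idx, enum in E; simpl in E. destruct (dec _) as [H|H]; [|tauto].
  destruct (proj2_sig (cid (small_enum n Y H))) as [_ [L S]].
  destruct (pos_spec a _ a (S a Ha)) as [_ E1]. destruct (pos_spec a' _ a (S a' Ha')) as [_ E2].
  rewrite <- E1, <- E2, E; auto.
Qed.

Lemma inf_Dn (X : st (A -> Prop)) : ~ fin {y | smem N y X} -> forall n, ss (Dn n) X.
Proof.
  intros Hinf n. destruct (ss_dec N (Dn n) X) as [H|H]; auto. exfalso; apply Hinf.
  set (Pe := fun p : A * (A -> Prop) => snd p (fst p)).
  assert (K : forall y, smem N y X -> ss (fun p => Pe p /\ ~ Dn n (snd p)) (sp N y X)).
  { intros y Hy. apply smem_ss in Hy. apply ss_and; auto.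
    apply (ss_pre N (fun Y => ~ Dn n Y) snd). rewrite sp_snd; auto. }
  assert (K2 : forall y, smem N y X -> exists k, k < n /\ sm (idx n) (sp N y X) = nu N k).
  { intros y Hy. apply ss_std_lt. apply (ss_img N _ _ _ _ (fun p (Hp : Pe p /\ ~ Dn n (snd p)) =>
       idx_lt n (fst p) (snd p) (proj1 Hp) (proj2 Hp)) (K y Hy)). }
  apply (fin_bounded (fun y => proj1_sig (cid (K2 (proj1_sig y) (proj2_sig y)))) n).
  - intros [y Hy] [y' Hy'] E; simpl in E. apply sig_eq; simpl.
    destruct (proj2_sig (cid (K2 y Hy))) as [_ E1]. destruct (proj2_sig (cid (K2 y' Hy'))) as [_ E2].
    rewrite <- E in E2. rewrite <- E2 in E1. clear E E2.
    set (z := sp N (sp N y y') X).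
    assert (Z1 : sm (fun q => fst (fst q)) z = y) by (rewrite smc; unfold z; rewrite !sp_fst; auto).
    assert (Z2 : sm (fun q => snd (fst q)) z = y') by (rewrite smc; unfold z; rewrite sp_fst, sp_snd; auto).
    assert (Z3 : sm snd z = X) by (unfold z; rewrite sp_snd; auto).
    assert (S1 := ss_sp N _ _ _ z _ _ (K y Hy) Z1 Z3).
    assert (S2 := ss_sp N _ _ _ z _ _ (K y' Hy') Z2 Z3).
    assert (S3 : ss (fun q => idx n (fst (fst q), snd q) = idx n (snd (fst q), snd q)) z).
    { apply ss_of_eq. rewrite (smc N (idx n) (fun q => (fst (fst q), snd q))).
      rewrite (smc N (idx n) (fun q => (snd (fst q), snd q))).
      rewrite !sp_map, Z1, Z2, Z3; auto. }
    assert (S4 := ss_and N _ _ _ (ss_and N _ _ _ S1 S2) S3).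
    apply (ss_mono N _ (fun q => fst (fst q) = snd (fst q))) in S4.
    + apply ss_eq in S4. rewrite Z1, Z2 in S4; auto.
    + intros q [[[P1 D1] [P2 D2]] E]. unfold Pe in *; simpl in *. eapply idx_inj; eauto.
  - intro y; exact (proj1 (proj2_sig (cid (K2 (proj1_sig y) (proj2_sig y))))).
Qed.
End FinStep.

Set Bullet Behavior "Strict Subproofs".

Section Main.
Variable N : NSA.
Variable B : Type.
Hypothesis HB : ~ fin B.
Hypothesis Hsat3 : forall A : Type, saturated_inside_le N B A.
Hypothesis Hsat4 : forall A : Type, card_le A B -> saturated_inside_le N (B -> bool) A.
Hypothesis Hcard : forall B' : Type, card_eq B' B -> card_eq (star N B') ((B -> bool) -> bool).
Notation st := (star N).
Notation sm := (smap N).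
Notation ss := (starsub N).

Definition somes {T} (l : list (option T)) : list T :=
  flat_map (fun i => match i with Some h => [h] | None => [] end) l.
Lemma somes_in {T} (l : list (option T)) h : In (Some h) l -> In h (somes l).
Proof. intro H; apply in_flat_map; exists (Some h); simpl; auto. Qed.

Lemma cBB : card_le B B. Proof. apply cle_refl. Qed.

Lemma part1a (beta : st B -> Prop) : internal N beta -> (forall b, beta (nu N b)) ->
  forall U : (B -> Prop) -> Prop, ultrafilter U -> exists x, beta x /\ forall S, U S -> ss S x.
Proof.
  intros Ib Hb U [U1 [U2 [U3 [U4 U5]]]].
  set (F := fun (i : option {S | U S}) => match i with None => beta | Some Sx => ss (proj1_sig Sx) end).
  destruct (Hsat4 B cBB (option {S | U S}) F) as [y Hy].
  - eapply cle_trans; [apply option_le, pred_le|apply (optfun_le B HB)].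
  - intros [S|]; simpl; [apply internal_ss|auto].
  - intro l.
    set (T := fun b => forall i, In i l -> match i with None => True | Some Sx => proj1_sig Sx b end).
    assert (UT : U T).
    { unfold T; clear F; induction l as [|i l IH].
      - apply (U3 (fun _ => True)); auto. intros b _ i [].
      - apply (U3 (fun b => (match i with None => True | Some Sx => proj1_sig Sx b end) /\
              (forall i0, In i0 l -> match i0 with None => True | Some Sx => proj1_sig Sx b end))).
        + apply U4; auto. destruct i as [[S HS]|]; simpl; auto.
        + intros b [H1 H2] i0 [<-|H]; [exact H1|exact (H2 i0 H)]. }
    destruct (classic (exists b, T b)) as [[b Tb]|NT].
    + exists (nu N b). intros [[S HS]|] Hi; simpl; auto. apply ss_nu. exact (Tb _ Hi).
    + exfalso; apply U2. apply (U3 T); auto. intros b Tb; apply NT; eauto.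
  - exists y; split; [exact (Hy None)|]. intros S HS. exact (Hy (Some (exist _ S HS))).
Qed.

Lemma ceqBB : card_eq B B.
Proof. exists (fun b => b); split; [intros x y H; auto|intro y; exists y; auto]. Qed.

Lemma part1b (beta : st B -> Prop) : internal N beta -> (forall b, beta (nu N b)) ->
  card_eq {x | beta x} ((B -> bool) -> bool).
Proof.
  intros Ib Hb. apply csb.
  - eapply cle_trans; [|apply ceq_le, (Hcard B ceqBB)].
    exists (@proj1_sig _ _); intros x y; apply sig_eq.
  - assert (Hx : forall g : (B -> bool) -> bool, exists x, beta x /\
               forall h, ss (fun b => Sfam B HB h b <-> g h = true) x).
    { intro g.
      set (F := fun (i : option (B -> bool)) => match i with None => beta
                   | Some h => ss (fun b => Sfam B HB h b <-> g h = true) end).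
      destruct (Hsat4 B cBB (option (B -> bool)) F) as [y Hy].
      - apply (optfun_le B HB).
      - intros [h|]; simpl; [apply internal_ss|auto].
      - intro l. destruct (indep_B B HB (somes l) g) as [b Hb'].
        exists (nu N b). intros [h|] Hi; simpl; auto. apply ss_nu. apply Hb'. apply somes_in; auto.
      - exists y; split; [exact (Hy None)|]. intro h; exact (Hy (Some h)). }
    exists (fun g => exist beta (proj1_sig (cid (Hx g))) (proj1 (proj2_sig (cid (Hx g))))).
    intros g g' E. apply (f_equal (@proj1_sig _ _)) in E. simpl in E.
    destruct (proj2_sig (cid (Hx g))) as [_ H1]. destruct (proj2_sig (cid (Hx g'))) as [_ H2].
    rewrite E in H1.
    apply functional_extensionality; intro h. apply NNPP; intro NE.
    apply (ss_empty N _ _ (fun b (K : (Sfam B HB h b <-> g h = true) /\ (Sfam B HB h b <-> g' h = true)) =>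
        NE ltac:(destruct K as [K1 K2]; destruct (g h), (g' h); try (apply NE; reflexivity); assert (false = true) by tauto; discriminate)) (ss_and N _ _ _ (H1 h) (H2 h))).
Qed.
End Main.

Set Bullet Behavior "Strict Subproofs".

Section Graph.
Variables (B A : Type).
Definition InjGraph (Z : B -> Prop) (R : B * A -> Prop) (Y : A -> Prop) :=
  (forall p, R p -> Z (fst p) /\ Y (snd p)) /\ (forall b, Z b -> exists a, R (b, a)) /\
  (forall b a a', R (b, a) -> R (b, a') -> a = a') /\ (forall b b' a, R (b, a) -> R (b', a) -> b = b').
Definition TT := ((B -> Prop) * (B * A -> Prop))%type.
Definition Good (l : list B) (q : TT * (A -> Prop)) :=
  (forall b, In b l -> fst (fst q) b) /\ InjGraph (fst (fst q)) (snd (fst q)) (snd q).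

Lemma std_graph (l : list B) : forall Y, Dn (length l) Y -> exists t : TT, Good l (t, Y).
Proof.
  induction l as [|b l IH]; intros Y HY.
  - exists ((fun _ => False), (fun _ => False)). unfold Good, InjGraph; simpl; repeat split; intros; tauto.
  - destruct HY as [[|a l'] [L [ND S]]]; [discriminate|]. simpl in L; injection L; intro L'.
    inversion ND as [|? ? Na ND']; subst.
    destruct (IH (fun x => Y x /\ x <> a)) as [[Z R] [G1 [I1 [I2 [I3 I4]]]]].
    { unfold Dn; exists l'; split; [auto|split; [auto|]].
      intros x Hx; split; [apply S; simpl; auto|intro E; subst; tauto]. }
    simpl in *.
    exists ((fun x => (Z x /\ x <> b) \/ x = b), (fun p => (R p /\ fst p <> b) \/ p = (b, a))).
    unfold Good, InjGraph; simpl. split; [|split; [|split; [|split]]].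
    + intros x [<-|Hx]; auto. destruct (dec (x = b)); auto.
    + intros p [[Rp Np]| ->]; simpl; split.
      * left; split; [apply I1|]; auto.
      * apply I1; auto.
      * auto.
      * apply S; simpl; auto.
    + intros x [[Zx Nx]| ->].
      * destruct (I2 x Zx) as [a' Ha']. exists a'; left; auto.
      * exists a; auto.
    + intros x c c' [[R1 N1]|E1] [[R2 N2]|E2].
      * eapply I3; eauto.
      * injection E2; intros; subst; simpl in N1; tauto.
      * injection E1; intros; subst; simpl in N2; tauto.
      * injection E1; injection E2; intros; subst; auto.
    + intros x x' c [[R1 N1]|E1] [[R2 N2]|E2].
      * eapply I4; eauto.
      * injection E2; intros; subst. destruct (I1 _ R1) as [_ [_ K]]; simpl in K; tauto.
      * injection E1; intros; subst. destruct (I1 _ R2) as [_ [_ K]]; simpl in K; tauto.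
      * injection E1; injection E2; intros; subst; auto.
Qed.
End Graph.

Section Part2.
Variable N : NSA.
Variable B : Type.
Hypothesis HB : ~ fin B.
Hypothesis Hsat3 : forall A : Type, saturated_inside_le N B A.
Notation st := (star N).
Notation sm := (smap N).
Notation ss := (starsub N).
Variable A : Type.
Variable X : st (A -> Prop).
Hypothesis Hinf : ~ fin {y | smem N y X}.

Let C := (TT B A * (A -> Prop))%type.

Lemma ex_t : exists t, forall b, ss (Good B A [b]) (sp N t X).
Proof.
  set (F := fun b (t : st (TT B A)) => ss (Good B A [b]) (sp N t X)).
  destruct (Hsat3 (TT B A) B F (cle_refl B)) as [t Ht].
  - intro b. exists (sm (fun Y t => Good B A [b] (t, Y)) X). intro t. unfold F. rewrite smem_map.
    split; apply ss_mono; intros [p q]; auto.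
  - intro l. destruct (ss_choice N (Dn (length l)) (Good B A l) X (std_graph B A l)
       (inf_Dn N A X Hinf (length l))) as [t Ht].
    exists t. intros b Hb. revert Ht; apply ss_mono. intros q [G1 G2]; split; auto.
    intros b' [<-|[]]; auto.
  - exists t; exact Ht.
Qed.

Definition tstar := proj1_sig (cid ex_t).
Definition cc : st C := sp N tstar X.
Lemma cc_good b : ss (Good B A [b]) cc. Proof. exact (proj2_sig (cid ex_t) b). Qed.

Definition Zq (q : C) := fst (fst q).
Definition Rq (q : C) := snd (fst q).
Definition IGp (q : C) := InjGraph B A (Zq q) (Rq q) (snd q).
Definition Zs := sm Zq cc.
Definition Rs := sm Rq cc.

Lemma b0ex : exists b : B, True.
Proof. destruct (ex_notin B HB []) as [b _]; eauto. Qed.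
Lemma IGc : ss IGp cc.
Proof. destruct b0ex as [b0 _]. generalize (cc_good b0); apply ss_mono. intros q [_ G]; exact G. Qed.

Lemma ss_lift {D} (u : st D) : ss (fun p : D * C => IGp (snd p)) (sp N u cc).
Proof. apply (ss_pre N IGp snd). rewrite sp_snd. apply IGc. Qed.

Lemma Zs_nu b : smem N (nu N b) Zs.
Proof.
  unfold Zs; rewrite smem_map.
  assert (E : sm (fun q => (b, q)) cc = sp N (nu N b) cc).
  { apply sp_ext; rewrite smap_comp; simpl; [apply smap_const|apply smap_id]. }
  rewrite <- E. generalize (cc_good b). apply ss_img. intros q [G _]; simpl; apply G; simpl; auto.
Qed.

Lemma tr_total x : smem N x Zs -> exists y, smem N (sp N x y) Rs.
Proof.
  unfold Zs, Rs; rewrite smem_map. intro H.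
  destruct (ss_choice N (fun p : B * C => Zq (snd p) (fst p) /\ IGp (snd p))
              (fun r : A * (B * C) => Rq (snd (snd r)) (fst (snd r), fst r)) (sp N x cc)) as [y Hy].
  - intros [b q] [Zb [_ [K _]]]; simpl in *. destruct (K b Zb) as [a Ha]; eauto.
  - apply ss_and; auto. apply ss_lift.
  - exists y. rewrite smem_map.
    apply (ss_sp_img N _ _ (fun r => (fst (snd r), fst r)) (fun r => snd (snd r)) _ _ _ Hy); auto.
    + rewrite sp_map, (sps N fst), sp_fst, sp_fst; auto.
    + rewrite (sps N snd), sp_snd; auto.
Qed.

Lemma tr_func x y y' : smem N (sp N x y) Rs -> smem N (sp N x y') Rs -> y = y'.
Proof.
  unfold Rs; rewrite !smem_map. intros H1 H2.
  set (z := sp N (sp N x (sp N y y')) cc).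
  assert (S1 := ss_sp N _ (fun q => (fst (fst q), fst (snd (fst q)))) snd z _ _ H1).
  assert (S2 := ss_sp N _ (fun q => (fst (fst q), snd (snd (fst q)))) snd z _ _ H2).
  assert (S3 := ss_lift (sp N x (sp N y y'))).
  fold z in S3.
  assert (E1 : sm (fun q => (fst (fst q), fst (snd (fst q)))) z = sp N x y).
  { unfold z; rewrite sp_map, (spf N fst), sp_fst, (spf N (fun w => fst (snd w))), (sps N fst), sp_fst; auto. }
  assert (E2 : sm (fun q => (fst (fst q), snd (snd (fst q)))) z = sp N x y').
  { unfold z; rewrite sp_map, (spf N fst), sp_fst, (spf N (fun w => snd (snd w))), (sps N snd), sp_snd; auto. }
  assert (E3 : sm snd z = cc) by (unfold z; apply sp_snd).
  specialize (S1 E1 E3). specialize (S2 E2 E3).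
  assert (S := ss_and N _ _ _ (ss_and N _ _ _ S1 S2) S3).
  apply (ss_mono N _ (fun q => fst (snd (fst q)) = snd (snd (fst q)))) in S.
  - apply ss_eq in S. unfold z in S.
    rewrite (spf N (fun w => fst (snd w))), (sps N fst), sp_fst in S.
    rewrite (spf N (fun w => snd (snd w))), (sps N snd), sp_snd in S. auto.
  - intros q [[K1 K2] [_ [_ [K _]]]]; simpl in *. eapply K; eauto.
Qed.

Lemma tr_inj x x' y : smem N (sp N x y) Rs -> smem N (sp N x' y) Rs -> x = x'.
Proof.
  unfold Rs; rewrite !smem_map. intros H1 H2.
  set (z := sp N (sp N y (sp N x x')) cc).
  assert (S1 := ss_sp N _ (fun q => (fst (snd (fst q)), fst (fst q))) snd z _ _ H1).
  assert (S2 := ss_sp N _ (fun q => (snd (snd (fst q)), fst (fst q))) snd z _ _ H2).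
  assert (S3 := ss_lift (sp N y (sp N x x'))).
  fold z in S3.
  assert (E1 : sm (fun q => (fst (snd (fst q)), fst (fst q))) z = sp N x y).
  { unfold z; rewrite sp_map, (spf N fst), sp_fst, (spf N (fun w => fst (snd w))), (sps N fst), sp_fst; auto. }
  assert (E2 : sm (fun q => (snd (snd (fst q)), fst (fst q))) z = sp N x' y).
  { unfold z; rewrite sp_map, (spf N fst), sp_fst, (spf N (fun w => snd (snd w))), (sps N snd), sp_snd; auto. }
  assert (E3 : sm snd z = cc) by (unfold z; apply sp_snd).
  specialize (S1 E1 E3). specialize (S2 E2 E3).
  assert (S := ss_and N _ _ _ (ss_and N _ _ _ S1 S2) S3).
  apply (ss_mono N _ (fun q => fst (snd (fst q)) = snd (snd (fst q)))) in S.
  - apply ss_eq in S. unfold z in S.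
    rewrite (spf N (fun w => fst (snd w))), (sps N fst), sp_fst in S.
    rewrite (spf N (fun w => snd (snd w))), (sps N snd), sp_snd in S. auto.
  - intros q [[K1 K2] [_ [_ [_ K]]]]; simpl in *. eapply K; eauto.
Qed.

Lemma tr_range x y : smem N (sp N x y) Rs -> smem N x Zs /\ smem N y X.
Proof.
  unfold Rs; rewrite !smem_map. intro H.
  assert (S := ss_and N _ _ _ H (ss_lift (sp N x y))).
  split.
  - unfold Zs; rewrite smem_map.
    apply (ss_sp_img N _ _ (fun p => fst (fst p)) snd _ _ _ S).
    + intros q [K [K1 _]]. apply (K1 _ K).
    + rewrite (spf N fst), sp_fst; auto.
    + apply sp_snd.
  - assert (EX : X = sm snd cc) by (unfold cc; rewrite sp_snd; auto).
    rewrite EX, smem_map.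
    apply (ss_sp_img N _ _ (fun p => snd (fst p)) snd _ _ _ S).
    + intros q [K [K1 _]]. apply (K1 _ K).
    + rewrite (spf N snd), sp_snd; auto.
    + apply sp_snd.
Qed.

Definition beta2 := fun x => smem N x Zs.
Definition f2 (x : {x | beta2 x}) : {y | smem N y X}.
Proof.
  destruct x as [x Hx]. set (H := tr_total x Hx).
  exists (proj1_sig (cid H)). exact (proj2 (tr_range _ _ (proj2_sig (cid H)))).
Defined.
Lemma f2_spec x : smem N (sp N (proj1_sig x) (proj1_sig (f2 x))) Rs.
Proof. destruct x as [x Hx]. exact (proj2_sig (cid (tr_total x Hx))). Qed.

Lemma f2_inj : injective f2.
Proof.
  intros x x' E. apply sig_eq. apply (tr_inj _ _ (proj1_sig (f2 x))).
  - apply f2_spec.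
  - rewrite E; apply f2_spec.
Qed.

Lemma graph_internal : internal N (fun z : st (B * A) =>
   exists x : {x | beta2 x}, sm fst z = proj1_sig x /\ sm snd z = proj1_sig (f2 x)).
Proof.
  exists Rs. intro z. split.
  - intros [x [E1 E2]]. rewrite (sp_ext N z _ _ E1 E2). apply f2_spec.
  - intro H. rewrite (sp_ext N z _ _ eq_refl eq_refl) in H.
    destruct (tr_range _ _ H) as [Hx _].
    exists (exist beta2 (sm fst z) Hx). split; auto. simpl.
    apply (tr_func (sm fst z)); auto. exact (f2_spec (exist beta2 _ Hx)).
Qed.
End Part2.

Set Bullet Behavior "Strict Subproofs".

Lemma fin_inj {T T'} (g : T -> T') : injective g -> fin T' -> fin T.
Proof.
  intros Hi [l Hl].
  set (pick := fun t' => match dec (exists t, g t = t') with left H => [proj1_sig (cid H)] | right _ => [] end).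
  exists (flat_map pick l). intro t. apply in_flat_map. exists (g t); split; auto.
  unfold pick; destruct (dec _) as [H|H]; [|exfalso; eauto]. left. apply Hi. exact (proj2_sig (cid H)).
Qed.

Section P3.
Variable N : NSA.
Variable B : Type.
Hypothesis HB : ~ fin B.
Hypothesis Hconf : confined N B.
Hypothesis Hcard : forall B' : Type, card_eq B' B -> card_eq (star N B') ((B -> bool) -> bool).
Variable A : Type.
Variable SS : (A -> Prop) -> Prop.
Hypothesis HSS : forall E, SS E -> fin {a | E a}.
Variable X : star N (A -> Prop).
Hypothesis HX : starsub N SS X.

Lemma part3_upper : card_le {y | members N X y} ((B -> bool) -> bool).
Proof.
  destruct (Hconf (A -> Prop) X) as [E [[e He] HE]].
  set (U := fun a => exists S, E S /\ SS S /\ S a).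
  assert (K : forall y, members N X y -> starsub N U y).
  { intros y Hy. unfold members in Hy. apply smem_ss in Hy.
    assert (H2 : starsub N (fun p : A * (A -> Prop) => E (snd p) /\ SS (snd p)) (sp N y X)).
    { apply (ss_pre N (fun S => E S /\ SS S) snd). rewrite sp_snd. apply ss_and; auto. }
    rewrite <- (sp_fst N y X). apply (ss_img N _ _ _ _ (fun p (Hp : snd p (fst p) /\ (E (snd p) /\ SS (snd p))) =>
       ex_intro _ (snd p) (conj (proj1 (proj2 Hp)) (conj (proj2 (proj2 Hp)) (proj1 Hp))) : U (fst p))).
    apply ss_and; auto. }
  assert (UB : card_le {a | U a} B).
  { set (P := fun (a : {a | U a}) (p : {S | E S} * nat) => exists H : SS (proj1_sig (fst p)),
        exists w, nth_error (proj1_sig (cid (HSS _ H))) (snd p) = Some w /\ proj1_sig w = proj1_sig a).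
    assert (Hc : forall a, exists p, P a p).
    { intros [a [S [ES [SSS Sa]]]].
      destruct (In_nth_error _ (exist _ a Sa) (proj2_sig (cid (HSS S SSS)) (exist _ a Sa))) as [n Hn].
      exists (exist _ S ES, n). exists SSS, (exist _ a Sa); auto. }
    eapply cle_trans; [|apply (sq_le B HB)].
    eapply cle_trans; [|apply (prod_le _ _ _ _ (ex_intro _ e He) (nat_le B HB))].
    exists (fun a => proj1_sig (cid (Hc a))).
    intros a a' Eq.
    assert (P1 := proj2_sig (cid (Hc a))). assert (P2 := proj2_sig (cid (Hc a'))).
    simpl in P1, P2. rewrite Eq in P1. 
    destruct P1 as [H [w [Hw1 Hw2]]]. destruct P2 as [H' [w' [Hw1' Hw2']]].
    rewrite (proof_irrelevance _ H H') in Hw1. rewrite Hw1 in Hw1'. injection Hw1'; intro; subst.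
    apply sig_eq; congruence. }
  destruct UB as [u Hu].
  eapply cle_trans; [|apply ceq_le, (Hcard B (ceqBB B))].
  exists (fun y => smap N u (proj1_sig (cid (K (proj1_sig y) (proj2_sig y))))).
  intros [y Hy] [y' Hy'] Eq; simpl in Eq. apply (smap_inj N u Hu) in Eq.
  apply sig_eq; simpl.
  rewrite <- (proj2_sig (cid (K y Hy))), <- (proj2_sig (cid (K y' Hy'))), Eq; auto.
Qed.
End P3.

Theorem mainTheorem12 (N : NSA) (B : Type) :
  ~ fin B ->
  confined N B ->
  (forall A : Type, saturated_inside_le N B A) ->
  (forall A : Type, card_le A B -> saturated_inside_le N (B -> bool) A) ->
  (forall B' : Type, card_eq B' B -> card_eq (star N B') ((B -> bool) -> bool)) ->
  (* (i) *)
  (forall beta : star N B -> Prop, internal N beta ->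
     (forall b : B, beta (nu N b)) ->
     (forall U : (B -> Prop) -> Prop, ultrafilter U ->
        exists x, beta x /\ forall S, U S -> starsub N S x) /\
     card_eq {x | beta x} ((B -> bool) -> bool)) /\
  (* (ii) *)
  (forall (A : Type) (alpha : star N A -> Prop), internal N alpha ->
     fin {y | alpha y} \/
     ((exists (beta : star N B -> Prop) (f : {x | beta x} -> {y | alpha y}),
         internal N beta /\ (forall b : B, beta (nu N b)) /\
         injective f /\
         internal N (fun z : star N (B * A) =>
            exists x : {x | beta x},
              smap N fst z = proj1_sig x /\ smap N snd z = proj1_sig (f x))) /\
      card_le ((B -> bool) -> bool) {y | alpha y})) /\
  (* (iii) *)
  (forall (A : Type) (SS : (A -> Prop) -> Prop),
     (forall E, SS E -> fin {a | E a}) ->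
     forall X : star N (A -> Prop), starsub N SS X ->
       fin {y | members N X y} \/
       card_eq {y | members N X y} ((B -> bool) -> bool)).
Proof.
  intros HB Hconf Hsat3 Hsat4 Hcard.
  assert (P2 : forall (A : Type) (X : star N (A -> Prop)) (Hinf : ~ fin {y | smem N y X}),
     card_le ((B -> bool) -> bool) {y | smem N y X}).
  { intros A X Hinf.
    eapply cle_trans; [apply ceq_le', (part1b N B HB Hsat4 Hcard (beta2 N B Hsat3 A X Hinf))|].
    - exists (Zs N B Hsat3 A X Hinf); intro y; unfold beta2; tauto.
    - apply Zs_nu.
    - exists (f2 N B HB Hsat3 A X Hinf); apply f2_inj. }
  split; [|split].
  - intros beta Ib Hb. split.
    + intros U HU; apply (part1a N B HB Hsat4 beta Ib Hb U HU).
    + apply (part1b N B HB Hsat4 Hcard beta Ib Hb).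
  - intros A alpha [X HX].
    destruct (classic (fin {y | alpha y})) as [F|NF]; [left; exact F|right].
    assert (Hinf : ~ fin {y | smem N y X}).
    { intro F; apply NF. apply (fin_inj (fun y : {y | alpha y} => exist (fun y => smem N y X) (proj1_sig y) (proj1 (HX _) (proj2_sig y)))); auto.
      intros [y Hy] [y' Hy'] E; apply sig_eq; simpl; apply (f_equal (@proj1_sig _ _)) in E; exact E. }
    set (conv := fun y : {y | smem N y X} => exist alpha (proj1_sig y) (proj2 (HX _) (proj2_sig y))).
    assert (Cinj : injective conv).
    { intros [y Hy] [y' Hy'] E; apply sig_eq; simpl; apply (f_equal (@proj1_sig _ _)) in E; exact E. }
    split.
    + exists (beta2 N B Hsat3 A X Hinf), (fun x => conv (f2 N B HB Hsat3 A X Hinf x)).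
      split; [|split; [|split]].
      * exists (Zs N B Hsat3 A X Hinf); intro y; unfold beta2; tauto.
      * apply Zs_nu.
      * intros x x' E; apply Cinj in E; apply (f2_inj N B HB Hsat3 A X Hinf) in E; exact E.
      * exact (graph_internal N B HB Hsat3 A X Hinf).
    + eapply cle_trans; [apply (P2 A X Hinf)|]. exists conv; exact Cinj.
  - intros A SS HSS X HX.
    destruct (classic (fin {y | members N X y})) as [F|NF]; [left; exact F|right].
    apply csb.
    + apply (part3_upper N B HB Hconf Hcard A SS HSS X HX).
    + apply (P2 A X NF).
Qed.
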